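(* There exists an antipodal $3$-splitting of $Q_2^4$, and there exists an antipodal $5$-splitting of $Q_2^8$.
   Context: $Q_2^n=\{0,1\}^n$. For $0\le m\le n$, an $m$-face of $Q_2^n$ is given by a tuple $a=(a_1,\dots,a_n)\in\{0,1,*\}^n$ with exactly $m$ entries equal to $*$; it denotes the set $\{x\in Q_2^n : x_i=a_i \text{ whenever } a_i\in\{0,1\}\}$. The direction of a face is the set of positions of its asterisks; two faces are parallel if they have the same direction, and two parallel faces $a,b$ are antipodal if $b_i=1-a_i$ at every non-asterisk position $i$. For positive integers $k<n$, an antipodal $k$-splitting of $Q_2^n$ is a collection of exactly $2^k$ $(n-k)$-faces whose union is $Q_2^n$ and which contains no pair of parallel non-antipodal faces. *)

(* Defs.v *)
From mathcomp Require Import all_boot.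
Set Implicit Arguments. Unset Strict Implicit. Unset Printing Implicit Defensive.

Definition vertex (n : nat) := {ffun 'I_n -> bool}.

(* A face of Q_2^n : a tuple in {0,1,*}^n, encoded with None = '*',
   Some false = 0, Some true = 1. *)
Definition face (n : nat) := {ffun 'I_n -> option bool}.

Definition direction n (a : face n) : {set 'I_n} := [set i | a i == None].

Definition face_dim n (a : face n) : nat := #|direction a|.

Definition in_face n (a : face n) (x : vertex n) : bool :=
  [forall i, if a i is Some c then x i == c else true].

Definition parallel n (a b : face n) : bool := direction a == direction b.

Definition antipodal n (a b : face n) : bool :=
  parallel a b &&
  [forall i, if a i is Some c then b i == Some (~~ c) else true].

Definition antipodal_splitting (n k : nat) (S : {set face n}) : Prop :=
  [/\ 0 < k /\ k < n,
      #|S| = 2 ^ k,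
      (forall a, a \in S -> face_dim a = n - k),
      (forall x : vertex n, exists2 a, a \in S & in_face a x) &
      (forall a b, a \in S -> b \in S -> a != b -> parallel a b -> antipodal a b)].
Arguments antipodal_splitting : clear implicits.

(* Main.v *)
Require Import Defs.
From mathcomp Require Import all_boot.

Set Implicit Arguments. Unset Strict Implicit. Unset Printing Implicit Defensive.

Notation N := (@None bool).
Notation O := (Some false).
Notation I := (Some true).

Definition F n (l : seq (option bool)) : face n := [ffun i : 'I_n => nth None l i].

Fixpoint bl (n : nat) : seq (seq bool) :=
  if n is n'.+1 then [seq b :: s | b <- [:: true; false], s <- bl n'] else [:: [::]].

Lemma bl_mem n (s : seq bool) : size s = n -> s \in bl n.
Proof.
elim: n s => [|n IH] [|b s] //= [Hs].
rewrite mem_cat; case: b.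
  by apply/orP; left; apply/mapP; exists s => //; apply: IH.
by apply/orP; right; rewrite cats0; apply/mapP; exists s => //; apply: IH.
Qed.

Lemma card_iota n (P : pred nat) : #|[pred i : 'I_n | P i]| = count P (iota 0 n).
Proof.
rewrite -val_enum_ord count_map cardE /enum_mem size_filter -enumT.
by rewrite (@eq_filter _ _ predT) ?filter_predT.
Qed.

Lemma forall_iota n (P : pred nat) : [forall i : 'I_n, P i] = all P (iota 0 n).
Proof.
apply/forallP/allP => [H x|H i].
  by rewrite mem_iota add0n => /andP[_ Hx]; exact: (H (Ordinal Hx)).
by apply: H; rewrite mem_iota add0n ltn_ord.
Qed.

Definition inf n (l : seq (option bool)) (v : seq bool) :=
  all (fun i => if nth None l i is Some c then nth false v i == c else true) (iota 0 n).
Definition par n (la lb : seq (option bool)) :=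
  all (fun i => (nth None la i == None) == (nth None lb i == None)) (iota 0 n).
Definition antip n (la lb : seq (option bool)) :=
  all (fun i => if nth None la i is Some c then nth None lb i == Some (~~ c) else true)
    (iota 0 n).

Definition good n k (L : seq (seq (option bool))) : bool :=
  [&& 0 < k, k < n, uniq L, size L == 2 ^ k,
   all (fun l => (size l == n) && (count (fun i => nth None l i == None) (iota 0 n) == n - k)) L,
   all (fun v => has (fun l => inf n l v) L) (bl n) &
   all (fun la => all (fun lb => (la != lb) ==> par n la lb ==> antip n la lb) L) L].

Lemma good_split n k L : good n k L -> antipodal_splitting n k [set a in map (F n) L].
Proof.
case/and5P => k0 kn uL sL /and3P[sz cov ant].
have Finj : {in L &, injective (F n)}.
  move=> la lb /(allP sz)/andP[/eqP sa _] /(allP sz)/andP[/eqP sb _] E.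
  apply: (@eq_from_nth _ None); first by rewrite sa sb.
  move=> i; rewrite sa => Hi.
  by have := congr1 (fun f : face n => f (Ordinal Hi)) E; rewrite /F !ffunE.
split => //.
- have U : uniq (map (F n) L) by rewrite map_inj_in_uniq.
  by rewrite cardsE (card_uniqP U) size_map (eqP sL).
- move=> a; rewrite inE => /mapP[l lL ->].
  have /andP[_ /eqP <-] := allP sz l lL.
  rewrite /face_dim /direction cardsE.
  rewrite -(card_iota n (fun i => nth None l i == None)).
  by apply: eq_card => i; rewrite unfold_in /F ffunE inE /=; case: (nth _ _ _).
- move=> x.
  have /hasP[l lL Hl] := allP cov _ (bl_mem (size_mkseq (fun i => if @insub _ (fun j => j < n) 'I_n i is Some j then x j else false) n)).
  exists (F n l); first by rewrite inE map_f.
  apply/forallP => j.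
  have Hj : val j \in iota 0 n by rewrite mem_iota add0n ltn_ord.
  have := allP Hl _ Hj.
  rewrite nth_mkseq ?ltn_ord // (_ : insub (val j) = Some j) ?ffunE //.
  by rewrite valK.
- move=> a b; rewrite !inE => /mapP[la laL ->] /mapP[lb lbL ->] neq P.
  rewrite /antipodal P /=.
  have nl : la != lb by apply: contraNneq neq => ->.
  have Hp : par n la lb.
    apply/allP => i; rewrite mem_iota add0n => /andP[_ Hi].
    have := congr1 (fun A : {set 'I_n} => Ordinal Hi \in A) (eqP P).
    by rewrite /direction !inE !ffunE /= => ->.
  have := allP (allP ant la laL) lb lbL; rewrite nl Hp /= => H.
  apply/forallP => j.
  have Hj : val j \in iota 0 n by rewrite mem_iota add0n ltn_ord.
  by have := allP H _ Hj; rewrite !ffunE.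
Qed.

Definition L4 : seq (seq (option bool)) :=
  [:: [:: O; O; N; O];
  [:: I; I; N; I];
  [:: I; O; O; N];
  [:: O; I; I; N];
  [:: N; I; O; O];
  [:: N; O; I; I];
  [:: I; N; I; O];
  [:: O; N; O; I]].

Definition L8 : seq (seq (option bool)) :=
  [:: [:: N; N; O; O; O; O; N; O];
  [:: N; N; I; I; I; I; N; I];
  [:: N; O; I; O; O; N; N; O];
  [:: N; I; O; I; I; N; N; I];
  [:: N; I; I; O; N; N; O; O];
  [:: N; O; O; I; N; N; I; I];
  [:: O; N; N; I; O; O; O; N];
  [:: I; N; N; O; I; I; I; N];
  [:: I; O; N; I; O; N; N; O];
  [:: O; I; N; O; I; N; N; I];
  [:: I; I; N; I; O; N; O; N];
  [:: O; O; N; O; I; N; I; N];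
  [:: N; N; O; N; I; O; O; O];
  [:: N; N; I; N; O; I; I; I];
  [:: N; O; I; O; I; N; O; N];
  [:: N; I; O; I; O; N; I; N];
  [:: N; N; I; I; I; O; O; N];
  [:: N; N; O; O; O; I; I; N];
  [:: N; N; O; O; N; I; O; O];
  [:: N; N; I; I; N; O; I; I];
  [:: O; N; N; I; N; I; O; O];
  [:: I; N; N; O; N; O; I; I];
  [:: I; N; N; I; I; I; N; O];
  [:: O; N; N; O; O; O; N; I];
  [:: N; I; I; N; O; N; I; O];
  [:: N; O; O; N; I; N; O; I];
  [:: O; O; N; I; N; N; I; O];
  [:: I; I; N; O; N; N; O; I];
  [:: I; N; N; N; I; O; I; O];
  [:: O; N; N; N; O; I; O; I];
  [:: O; I; N; N; I; N; I; O];
  [:: I; O; N; N; O; N; O; I]].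

Theorem proposition3 :
  (exists S : {set face 4}, antipodal_splitting 4 3 S) /\
  (exists S : {set face 8}, antipodal_splitting 8 5 S).
Proof.
split.
  exists [set a in map (F 4) L4]; apply: good_split; by vm_compute.
exists [set a in map (F 8) L8]; apply: good_split; by vm_compute.
Qed.
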